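(* Let $\alpha\in(0,1)\setminus\mathbb{Q}$. For every integer $n\geq1$, $$\min_{1\leq k\leq n}\operatorname{dist}(k\alpha,\mathbb{Z})\geq\left(2e^nE_n(\alpha)\right)^{-1}.$$
   Context: Let $\Delta^2$ be the closed unit bidisk in $\mathbb{C}^2$, $\mathcal{P}_n$ the space of polynomials $P\in\mathbb{C}[z,w]$ of total degree at most $n$, $K=\{(e^z,e^{\alpha z}):\ |z|\leq1\}$, $\|P\|_A=\sup_A|P|$, and $E_n(\alpha)=\sup\{\|P\|_{\Delta^2}:\ P\in\mathcal{P}_n,\ \|P\|_K\leq1\}$. *)

(* Defs.v *)
From Stdlib Require Import Reals Lra Lia ZArith.
Open Scope R_scope.

Definition C := (R * R)%type.
Definition Cre (z : C) : R := fst z.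
Definition Cim (z : C) : R := snd z.
Definition C0 : C := (0, 0).
Definition C1 : C := (1, 0).
Definition Cadd (z w : C) : C := (fst z + fst w, snd z + snd w).
Definition Cmul (z w : C) : C :=
  (fst z * fst w - snd z * snd w, fst z * snd w + snd z * fst w).
Definition Crscal (a : R) (z : C) : C := (a * fst z, a * snd z).
Fixpoint Cpow (z : C) (n : nat) : C :=
  match n with O => C1 | S m => Cmul z (Cpow z m) end.
Definition Cmod (z : C) : R := sqrt (fst z * fst z + snd z * snd z).
Definition Cexp (z : C) : C := (exp (fst z) * cos (snd z), exp (fst z) * sin (snd z)).

Fixpoint Csum (f : nat -> C) (n : nat) : C :=
  match n with O => f O | S m => Cadd (Csum f m) (f (S m)) end.

(* A polynomial of total degree <= n in C[z,w], given by its coefficients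
   c i j (coefficients with i + j > n are ignored), evaluated at (z,w):
   sum_{i <= n} sum_{j <= n - i} c i j z^i w^j. *)
Definition poly_eval2 (n : nat) (c : nat -> nat -> C) (z w : C) : C :=
  Csum (fun i => Csum (fun j => Cmul (c i j) (Cmul (Cpow z i) (Cpow w j))) (n - i)) n.

Definition in_bidisk (z w : C) : Prop := Cmod z <= 1 /\ Cmod w <= 1.

Definition normK_le1 (alpha : R) (n : nat) (c : nat -> nat -> C) : Prop :=
  forall z : C, Cmod z <= 1 ->
    Cmod (poly_eval2 n c (Cexp z) (Cexp (Crscal alpha z))) <= 1.

(* The set whose supremum is E_n(alpha):
   { |P(z,w)| : P in P_n, ||P||_K <= 1, (z,w) in the closed unit bidisk }.
   Its supremum equals sup { ||P||_{Delta^2} : P in P_n, ||P||_K <= 1 }. *)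
Definition En_set (alpha : R) (n : nat) (x : R) : Prop :=
  exists (c : nat -> nat -> C) (z w : C),
    normK_le1 alpha n c /\ in_bidisk z w /\ x = Cmod (poly_eval2 n c z w).

Definition distZ (x : R) : R :=
  Rmin (x - IZR (Int_part x)) (IZR (Int_part x) + 1 - x).

Definition irrational (x : R) : Prop :=
  ~ exists (p q : Z), q <> 0%Z /\ x = IZR p / IZR q.

(* Main.v *)
Require Import Defs.
From Stdlib Require Import Reals.
Open Scope R_scope.
Require Import Defs.
From Stdlib Require Import Reals Lra Lia ZArith FunctionalExtensionality.
Require Import Defs.
Open Scope R_scope.

Lemma cos_lb y : -2 <= y <= 2 -> 1 - y*y/2 <= cos y.
Proof.
  intros [H1 H2]. pose proof (pre_cos_bound y 0 H1 H2) as [H _].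
  unfold cos_approx in H. simpl in H. unfold cos_term in H. simpl in H.
  lra.
Qed.

Lemma exp_ge x : 1 + x <= exp x.
Proof. destruct (Req_dec x 0). subst. rewrite exp_0. lra. left; apply exp_ineq1; auto. Qed.

Lemma exp_small x : 0 <= x <= 1/2 -> exp x <= 1 + 2*x.
Proof.
  intros [H1 H2]. pose proof (exp_ge (-x)).
  assert (exp x * exp (-x) = 1) by (rewrite <- exp_plus; replace (x + -x) with 0 by ring; apply exp_0).
  pose proof (exp_pos x). nra.
Qed.

Lemma expm1_sq x : -1/2 <= x <= 1/2 -> (exp x - 1)^2 <= 4 * x^2 /\ exp x <= 2.
Proof.
  intros [H1 H2]. pose proof (exp_ge x). destruct (Rle_dec 0 x).
  - pose proof (exp_small x). split; nra.
  - assert (exp x <= exp 0) by (apply exp_le_inv || (left; apply exp_increasing; lra)).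
    rewrite exp_0 in H0. split; nra.
Qed.

Lemma cexp_m1 x y : x*x + y*y <= 1/4 ->
  (exp x * cos y - 1)*(exp x * cos y - 1) + (exp x * sin y)*(exp x * sin y) <= 4*(x*x+y*y).
Proof.
  intros H.
  assert (-1/2 <= x <= 1/2) by nra. assert (-2 <= y <= 2) by nra.
  destruct (expm1_sq x H0) as [A B]. pose proof (cos_lb y H1).
  pose proof (sin2_cos2 y). unfold Rsqr in H3. pose proof (exp_pos x).
  replace ((exp x * cos y - 1)*(exp x * cos y - 1) + (exp x * sin y)*(exp x * sin y))
    with (exp x * exp x * (sin y * sin y + cos y * cos y) - 2 * exp x * cos y + 1) by ring.
  rewrite H3.
  assert (exp x * cos y >= exp x * (1 - y*y/2)) by (apply Rle_ge, Rmult_le_compat_l; lra).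
  nra.
Qed.
Lemma Cpair (z : C) : z = (fst z, snd z). Proof. destruct z; reflexivity. Qed.

Lemma Csum_add f g N : Csum (fun i => Cadd (f i) (g i)) N = Cadd (Csum f N) (Csum g N).
Proof.
  induction N; simpl; auto. rewrite IHN. unfold Cadd; simpl. f_equal; ring.
Qed.

Lemma Csum_zero f N : (forall j, (j <= N)%nat -> f j = C0) -> Csum f N = C0.
Proof.
  induction N; intros H; simpl. apply H; lia.
  rewrite IHN by (intros; apply H; lia). rewrite H by lia. unfold Cadd, C0; simpl; f_equal; ring.
Qed.

Lemma Csum_single f m N : (m <= N)%nat -> (forall j, j <> m -> f j = C0) -> Csum f N = f m.
Proof.
  induction N; intros Hm H; simpl.
  - assert (m = 0%nat) by lia. subst; auto.
  - destruct (Nat.eq_dec m (S N)).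
    + subst. rewrite Csum_zero by (intros; apply H; lia). unfold Cadd, C0; simpl.
      rewrite (Cpair (f (S N))) at 3. f_equal; simpl; ring.
    + rewrite IHN by (auto; lia). rewrite (H (S N)) by auto. unfold Cadd, C0; simpl.
      rewrite (Cpair (f m)) at 3. f_equal; simpl; ring.
Qed.

Definition mono (a : C) (i0 j0 : nat) (i j : nat) : C :=
  if andb (Nat.eqb i i0) (Nat.eqb j j0) then a else C0.

Lemma Cmul0 x : Cmul C0 x = C0.
Proof. unfold Cmul, C0; simpl; f_equal; ring. Qed.

Lemma poly_mono n a i0 j0 z w : (i0 + j0 <= n)%nat ->
  poly_eval2 n (mono a i0 j0) z w = Cmul a (Cmul (Cpow z i0) (Cpow w j0)).
Proof.
  intros H. unfold poly_eval2.
  rewrite (Csum_single _ i0) by (try lia; intros i Hi; apply Csum_zero; intros j _;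
     unfold mono; rewrite (proj2 (Nat.eqb_neq i i0) Hi); simpl; apply Cmul0).
  rewrite (Csum_single _ j0) by (try lia; intros j Hj; unfold mono;
     rewrite Nat.eqb_refl, (proj2 (Nat.eqb_neq j j0) Hj); simpl; apply Cmul0).
  unfold mono; rewrite !Nat.eqb_refl; reflexivity.
Qed.

Lemma poly_add n c1 c2 z w :
  poly_eval2 n (fun i j => Cadd (c1 i j) (c2 i j)) z w = Cadd (poly_eval2 n c1 z w) (poly_eval2 n c2 z w).
Proof.
  unfold poly_eval2. rewrite <- Csum_add. f_equal. apply functional_extensionality. intro i.
  rewrite <- Csum_add. f_equal. apply functional_extensionality. intro j.
  unfold Cadd, Cmul; simpl; f_equal; ring.
Qed.

Lemma Cexp_add a b : Cmul (Cexp a) (Cexp b) = Cexp (Cadd a b).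
Proof.
  unfold Cmul, Cexp, Cadd; simpl. rewrite exp_plus, cos_plus, sin_plus. f_equal; ring.
Qed.

Lemma Cpow_Cexp a m : Cpow (Cexp a) m = Cexp (Crscal (INR m) a).
Proof.
  induction m.
  - destruct a as [a1 a2]. unfold Cexp, Crscal, C1; simpl. rewrite !Rmult_0_l, exp_0, cos_0, sin_0. unfold Defs.C1. f_equal; ring.
  - simpl Cpow. rewrite IHm, Cexp_add. destruct a as [a1 a2]. unfold Cadd, Crscal. rewrite S_INR. simpl fst; simpl snd. f_equal; f_equal; ring.
Qed.

Lemma exp_mono a b : a <= b -> exp a <= exp b.
Proof. intros H. destruct (Req_dec a b). subst; lra. left; apply exp_increasing; lra. Qed.

Lemma Cpow_C1 p : Cpow Defs.C1 p = Defs.C1.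
Proof. induction p; simpl; auto. rewrite IHp. unfold Cmul, Defs.C1; simpl; f_equal; ring. Qed.


Lemma key2 alpha n k p E d : (1 <= k <= n)%nat -> (p <= k)%nat ->
  d = Rabs (INR k * alpha - INR p) -> 0 < d <= 1/2 -> is_lub (En_set alpha n) E ->
  d >= / (2 * exp (INR n) * E).
Proof.
  intros Hk Hp Hd Hd0 HE.
  pose proof (exp_pos (INR n)) as Hen.
  set (s := / (2 * exp (INR n) * d)).
  assert (Hs : 0 < s) by (unfold s; apply Rinv_0_lt_compat; nra).
  assert (Hsd : s * (2 * exp (INR n) * d) = 1) by (unfold s; field; split; lra).
  set (c := fun i j => Cadd (mono (s,0) 0 k i j) (mono (-s,0) p 0 i j)).
  assert (Hev : forall z w, poly_eval2 n c z w =
     Cadd (Cmul (s,0) (Cmul Defs.C1 (Cpow w k))) (Cmul (-s,0) (Cmul (Cpow z p) Defs.C1))).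
  { intros z w. unfold c. rewrite poly_add, !poly_mono by lia. reflexivity. }
  assert (HK : normK_le1 alpha n c).
  { intros [x y] Hz. rewrite Hev, !Cpow_Cexp.
    replace (Crscal (INR k) (Crscal alpha (x, y))) with
      (Cadd (Crscal (INR p) (x,y)) (Crscal (INR k * alpha - INR p) (x,y)))
      by (unfold Cadd, Crscal; simpl; f_equal; ring).
    rewrite <- Cexp_add.
    assert (HN : x*x + y*y <= 1).
    { unfold Cmod in Hz; simpl in Hz. pose proof (sqrt_sqrt (x*x+y*y)).
      pose proof (sqrt_pos (x*x+y*y)). assert (0 <= x*x+y*y) by nra. nra. }
    set (t := INR k * alpha - INR p) in *.
    assert (Ht : t * t = d * d) by (rewrite Hd; rewrite <- Rabs_mult, Rabs_right; [ring | nra]).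
    assert (Hu : (t*x)*(t*x) + (t*y)*(t*y) <= 1/4) by nra.
    pose proof (cexp_m1 (t*x) (t*y) Hu) as HU.
    assert (Hx : INR p * x <= INR n).
    { assert (x <= 1) by nra. pose proof (pos_INR p). assert (INR p <= INR n) by (apply le_INR; lia). nra. }
    pose proof (exp_mono _ _ Hx) as HX. pose proof (exp_pos (INR p * x)).
    pose proof (sin2_cos2 (INR p * y)) as Hsc. unfold Rsqr in Hsc.
    unfold Cmod, Cadd, Cmul, Cexp, Crscal, Defs.C1; simpl.
    apply Rle_trans with (sqrt 1); [|rewrite sqrt_1; lra]. apply sqrt_le_1_alt.
    set (ex := exp (INR p * x)) in *. set (co := cos (INR p * y)) in *. set (si := sin (INR p * y)) in *.
    set (u1 := exp (t*x) * cos (t*y)) in *. set (u2 := exp (t*x) * sin (t*y)) in *.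
    match goal with |- ?L <= 1 => replace L with (s*s * (ex*ex) * ((u1-1)*(u1-1) + u2*u2)) end.
    2:{ transitivity (s*s * (ex*ex*(si*si+co*co)) * ((u1-1)*(u1-1) + u2*u2)). rewrite Hsc; ring. ring. }
    assert (0 <= (u1-1)*(u1-1) + u2*u2) by (pose proof (Rle_0_sqr (u1-1)); pose proof (Rle_0_sqr u2); unfold Rsqr in *; lra).
    assert (ex*ex <= exp (INR n) * exp (INR n)) by nra.
    assert (((u1-1)*(u1-1) + u2*u2) <= 4 * (d*d)) by nra.
    assert (s*s*(ex*ex)*((u1-1)*(u1-1) + u2*u2) <= s*s*(exp (INR n) * exp (INR n))*(4*(d*d))).
    { apply Rmult_le_compat; try nra. }
    nra. }
  assert (Hmem : En_set alpha n s).
  { exists c, Defs.C1, Defs.C0. split; [exact HK|]. split.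
    - unfold in_bidisk, Cmod, Defs.C1, Defs.C0; simpl.
      replace (1*1+0*0) with 1 by ring. replace (0*0+0*0) with 0 by ring. rewrite sqrt_1, sqrt_0; lra.
    - rewrite Hev, Cpow_C1. destruct k as [|k']; [lia|]. simpl Cpow.
      unfold Cmod, Cadd, Cmul, Defs.C1, Defs.C0; simpl.
      match goal with |- _ = sqrt ?L => replace L with (s*s) by ring end.
      rewrite sqrt_square; lra. }
  destruct HE as [HE1 _]. pose proof (HE1 s Hmem) as HsE.
  assert (HE0 : 0 < E) by lra.
  assert (1 <= 2 * exp (INR n) * d * E).
  { assert (0 < 2 * exp (INR n) * d) by nra. nra. }
  apply Rle_ge. assert (Ha : 0 < 2 * exp (INR n) * E) by nra.
  apply Rle_trans with (/ (2 * exp (INR n) * E) * (2 * exp (INR n) * d * E)).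
  - rewrite <- (Rmult_1_r (/ (2 * exp (INR n) * E))) at 1. apply Rmult_le_compat_l; [left; apply Rinv_0_lt_compat; exact Ha| exact H].
  - right. field. lra.
Qed.

Theorem corollary1 (alpha : R) (Ha0 : 0 < alpha) (Ha1 : alpha < 1)
  (Hirr : irrational alpha) (n : nat) (Hn : (1 <= n)%nat) (E : R)
  (HE : is_lub (En_set alpha n) E) :
  forall k : nat, (1 <= k <= n)%nat ->
    distZ (INR k * alpha) >= / (2 * exp (INR n) * E).
Proof.
  intros k Hk.
  set (x := INR k * alpha).
  assert (Hk1 : 1 <= INR k) by (apply (le_INR 1); lia).
  assert (Hx0 : 0 < x) by (unfold x; nra).
  assert (Hxk : x < INR k) by (unfold x; nra).
  set (f := Int_part x).
  destruct (base_Int_part x) as [Hf1 Hf2]. fold f in Hf1, Hf2.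
  assert (Hf0 : (0 <= f)%Z) by (assert (-1 < f)%Z by (apply lt_IZR; lra); lia).
  assert (Hfk : (f + 1 <= Z.of_nat k)%Z)
    by (assert (f < Z.of_nat k)%Z by (apply lt_IZR; rewrite <- INR_IZR_INZ; lra); lia).
  assert (Hn0 : forall m : Z, (0 <= m)%Z -> IZR m = INR (Z.to_nat m))
    by (intros m Hm; rewrite INR_IZR_INZ, Z2Nat.id; auto).
  assert (Hgen : forall p : nat, (p <= k)%nat -> 0 <= Rabs (x - INR p) <= 1/2 ->
           distZ x = Rabs (x - INR p) -> distZ x >= / (2 * exp (INR n) * E)).
  { intros p Hp Hb Heq. rewrite Heq. apply (key2 alpha n k p E); auto.
    split; [|lra]. destruct (Rle_lt_or_eq_dec 0 _ (proj1 Hb)) as [Hlt|Heq0]; auto.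
    exfalso. apply Hirr. exists (Z.of_nat p), (Z.of_nat k). split; [lia|].
    rewrite <- !INR_IZR_INZ.
    assert (x - INR p = 0) by (destruct (Req_dec (x - INR p) 0); auto; exfalso;
      pose proof (Rabs_pos_lt _ H); lra).
    unfold x in H. assert (Hkp : INR k * alpha = INR p) by lra. rewrite <- Hkp. field. lra. }
  destruct (Rle_dec (x - IZR f) (IZR f + 1 - x)).
  - apply (Hgen (Z.to_nat f)). lia.
    rewrite <- Hn0 by lia. rewrite Rabs_right by lra. lra.
    rewrite <- Hn0 by lia. rewrite Rabs_right by lra. unfold distZ, Rmin. fold f.
    destruct (Rle_dec _ _); [lra|contradiction].
  - apply (Hgen (Z.to_nat (f+1))). lia.
    rewrite <- Hn0 by lia. rewrite plus_IZR. rewrite Rabs_left by lra. lra.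
    rewrite <- Hn0 by lia. rewrite plus_IZR. rewrite Rabs_left by lra. unfold distZ, Rmin. fold f.
    destruct (Rle_dec _ _); [contradiction|lra].
Qed.
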